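(* Let $\beta\in(0,\tfrac12)$. Then the systems $\mathcal S=\{\sin(n+\beta)t\}_{n\in\mathbb Z}$ and $\mathcal C=\{\cos(n+\beta)t\}_{n\in\mathbb Z}$ are complete in $L_2(0,2\pi)$. *)

(* Defs.v *)
From Stdlib Require Export Reals List.
Open Scope R_scope.

Definition lin_comb (phi : Z -> R -> R) (l : list (Z * R)) (t : R) : R :=
  fold_right (fun p acc => snd p * phi (fst p) t + acc) 0 l.

(* L2(0,2PI) is taken as the completion of C[0,2PI]
   under the L2 norm, so density of the span amounts to: every
   continuous f on [0,2PI] is approximated arbitrarily well in L2 norm
   (Riemann integral of |f - g|^2) by finite linear combinations g. *)
Definition complete_L2_0_2PI (phi : Z -> R -> R) : Prop :=
  forall f : R -> R,
    (forall t, 0 <= t <= 2 * PI -> continuity_pt f t) ->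
    forall eps : R, 0 < eps ->
      exists l : list (Z * R),
        exists pr : Riemann_integrable
                      (fun t => (f t - lin_comb phi l t) ^ 2) 0 (2 * PI),
          RiemannInt pr < eps.

Definition sin_system (beta : R) : Z -> R -> R :=
  fun n t => sin ((IZR n + beta) * t).
Definition cos_system (beta : R) : Z -> R -> R :=
  fun n t => cos ((IZR n + beta) * t).

(* Main.v *)
Require Import Defs.
From Stdlib Require Import Reals Lra Lia FunctionalExtensionality.
Open Scope R_scope.

Lemma sum_ext (A B : nat -> R) n :
  (forall k, (k <= n)%nat -> A k = B k) -> sum_f_R0 A n = sum_f_R0 B n.
Proof.
  induction n; intros H; simpl.
  - apply H; lia.
  - rewrite IHn by (intros; apply H; lia). rewrite H by lia. reflexivity.
Qed.

Lemma sum_le (A B : nat -> R) n :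
  (forall k, (k <= n)%nat -> A k <= B k) -> sum_f_R0 A n <= sum_f_R0 B n.
Proof.
  induction n; intros H; simpl.
  - apply H; lia.
  - apply Rplus_le_compat; [apply IHn; intros; apply H; lia | apply H; lia].
Qed.

Lemma sum_lin (A B : nat -> R) al be n :
  sum_f_R0 (fun k => al * A k + be * B k) n = al * sum_f_R0 A n + be * sum_f_R0 B n.
Proof. induction n; simpl; [ring| rewrite IHn; ring]. Qed.

Lemma sum_scal (A : nat -> R) al n :
  sum_f_R0 (fun k => al * A k) n = al * sum_f_R0 A n.
Proof. induction n; simpl; [ring| rewrite IHn; ring]. Qed.

Lemma sum_abs (A : nat -> R) n :
  Rabs (sum_f_R0 A n) <= sum_f_R0 (fun k => Rabs (A k)) n.
Proof.
  induction n; simpl; [lra|].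
  eapply Rle_trans; [apply Rabs_triang|]. lra.
Qed.

Lemma sum_shift (A : nat -> R) m :
  sum_f_R0 A (S m) = A 0%nat + sum_f_R0 (fun i => A (S i)) m.
Proof. induction m; simpl in *; [ring| rewrite IHm; ring]. Qed.

Lemma kC i m : (i <= m)%nat -> INR (S i) * C (S m) (S i) = INR (S m) * C m i.
Proof.
  intros Hi. unfold C. replace (S m - S i)%nat with (m - i)%nat by lia.
  rewrite !fact_simpl, !mult_INR.
  assert (H1 := INR_fact_neq_0 i). assert (H2 := INR_fact_neq_0 (m - i)).
  assert (H3 : INR (S i) <> 0) by (apply not_0_INR; lia).
  field. auto.
Qed.

Lemma shift_moment (G : nat -> R) m x y :
  sum_f_R0 (fun k => INR k * G k * (C (S m) k * x ^ k * y ^ (S m - k))) (S m)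
  = INR (S m) * x * sum_f_R0 (fun i => G (S i) * (C m i * x ^ i * y ^ (m - i))) m.
Proof.
  rewrite sum_shift. simpl INR at 1. rewrite Rmult_0_l, !Rmult_0_l, Rplus_0_l.
  rewrite <- sum_scal. apply sum_ext. intros k Hk.
  replace (S m - S k)%nat with (m - k)%nat by lia.
  simpl pow. transitivity (x * G (S k) * (INR (S k) * C (S m) (S k)) * x ^ k * y ^ (m - k)); [ring|]. rewrite (kC k m Hk). ring.
Qed.

Definition bern n x k := C n k * x ^ k * (1 - x) ^ (n - k).

Lemma bern_sum1 n x : sum_f_R0 (bern n x) n = 1.
Proof.
  unfold bern. rewrite <- binomial. replace (x + (1 - x)) with 1 by ring. apply pow1.
Qed.

Lemma bern_m1 n x : sum_f_R0 (fun k => INR k * bern n x k) n = INR n * x.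
Proof.
  destruct n as [|m].
  - simpl. ring.
  - transitivity (sum_f_R0 (fun k => INR k * (fun _ => 1) k * bern (S m) x k) (S m)).
    { apply sum_ext; intros; ring. }
    unfold bern. rewrite shift_moment.
    transitivity (INR (S m) * x * sum_f_R0 (bern m x) m).
    { f_equal. apply sum_ext; intros; unfold bern; ring. }
    rewrite bern_sum1. ring.
Qed.

Lemma bern_m2 n x :
  sum_f_R0 (fun k => INR k * (INR k - 1) * bern n x k) n = INR n * (INR n - 1) * x ^ 2.
Proof.
  destruct n as [|m].
  - simpl. ring.
  - unfold bern. rewrite shift_moment.
    transitivity (INR (S m) * x * sum_f_R0 (fun k => INR k * bern m x k) m).
    { f_equal. apply sum_ext; intros. unfold bern. rewrite S_INR. ring. }
    rewrite bern_m1. rewrite S_INR. ring.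
Qed.

Lemma bern_ge0 n x k : 0 <= x <= 1 -> (k <= n)%nat -> 0 <= bern n x k.
Proof.
  intros Hx Hk. unfold bern, C.
  assert (0 < INR (Factorial.fact n)) by (apply lt_0_INR, Factorial.lt_O_fact).
  assert (0 < INR (Factorial.fact k)) by (apply lt_0_INR, Factorial.lt_O_fact).
  assert (0 < INR (Factorial.fact (n - k))) by (apply lt_0_INR, Factorial.lt_O_fact).
  apply Rmult_le_pos; [apply Rmult_le_pos|].
  - apply Rlt_le, Rdiv_lt_0_compat; [lra| apply Rmult_lt_0_compat; lra].
  - apply pow_le; lra.
  - apply pow_le; lra.
Qed.

Lemma bern_var n x : (0 < n)%nat ->
  sum_f_R0 (fun k => (x - INR k / INR n) ^ 2 * bern n x k) n = x * (1 - x) / INR n.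
Proof.
  intros Hn. assert (Hn' : INR n <> 0) by (apply not_0_INR; lia).
  transitivity (sum_f_R0 (fun k => 1 * (x^2 * bern n x k + (1 / INR n ^ 2 - 2 * x / INR n) * (INR k * bern n x k)) + (1 / INR n ^ 2) * (INR k * (INR k - 1) * bern n x k)) n).
  { apply sum_ext. intros. field. auto. }
  rewrite sum_lin, (sum_lin (bern n x)).
  rewrite bern_sum1, bern_m1, bern_m2. field. auto.
Qed.

Lemma bern_approx n x F (v : nat -> R) eps del M :
  (0 < n)%nat -> 0 <= x <= 1 -> 0 < del -> 0 <= eps ->
  (forall k, (k <= n)%nat -> Rabs (x - INR k / INR n) < del -> Rabs (F - v k) <= eps) ->
  (forall k, (k <= n)%nat -> Rabs (F - v k) <= M) ->
  Rabs (F - sum_f_R0 (fun k => v k * bern n x k) n) <= eps + M / (4 * INR n * del ^ 2).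
Proof.
  intros Hn Hx Hd Heps H1 H2.
  assert (Hn' : 0 < INR n) by (apply lt_0_INR; lia).
  assert (HM : 0 <= M) by (eapply Rle_trans; [apply Rabs_pos| apply (H2 0%nat); lia]).
  replace (F - sum_f_R0 (fun k => v k * bern n x k) n)
    with (sum_f_R0 (fun k => (F - v k) * bern n x k) n).
  2:{ transitivity (F * sum_f_R0 (bern n x) n + (-1) * sum_f_R0 (fun k => v k * bern n x k) n).
      { rewrite <- sum_lin. apply sum_ext; intros. ring. }
      rewrite bern_sum1. ring. }
  eapply Rle_trans; [apply sum_abs|].
  eapply Rle_trans.
  { apply (sum_le _ (fun k => eps * bern n x k + (M / del ^ 2) * ((x - INR k / INR n) ^ 2 * bern n x k))).
    intros k Hk. rewrite Rabs_mult, (Rabs_right (bern n x k)) by (apply Rle_ge, bern_ge0; auto).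
    assert (Hb := bern_ge0 n x k Hx Hk).
    rewrite <- Rmult_assoc, <- Rmult_plus_distr_r. apply Rmult_le_compat_r; auto.
    destruct (Rlt_dec (Rabs (x - INR k / INR n)) del) as [h|h].
    - assert (0 <= M / del ^ 2 * (x - INR k / INR n) ^ 2).
      { apply Rmult_le_pos; [apply Rmult_le_pos; [lra| apply Rlt_le, Rinv_0_lt_compat, pow_lt; lra]| apply pow2_ge_0]. }
      specialize (H1 k Hk h). lra.
    - apply Rnot_lt_le in h.
      assert (del ^ 2 <= (x - INR k / INR n) ^ 2).
      { rewrite <- (pow2_abs (x - INR k / INR n)). apply pow_incr. split; lra. }
      assert (M <= M / del ^ 2 * (x - INR k / INR n) ^ 2).
      { assert (0 < del ^ 2) by (apply pow_lt; lra).
        apply (Rmult_le_reg_r (del ^ 2)); auto.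
        replace (M / del ^ 2 * (x - INR k / INR n) ^ 2 * del ^ 2) with (M * (x - INR k / INR n) ^ 2) by (field; lra).
        apply Rmult_le_compat_l; auto. }
      specialize (H2 k Hk). lra. }
  rewrite sum_lin, bern_sum1, bern_var by auto.
  assert (x * (1 - x) <= 1/4) by (assert (0 <= (x - 1/2)^2) by apply pow2_ge_0; nra).
  assert (0 < del ^ 2) by (apply pow_lt; lra).
  assert (M / del ^ 2 * (x * (1 - x) / INR n) <= M / (4 * INR n * del ^ 2)).
  { replace (M / del ^ 2 * (x * (1 - x) / INR n)) with ((M / (INR n * del^2)) * (x * (1-x))) by (field; lra).
    replace (M / (4 * INR n * del ^ 2)) with ((M / (INR n * del^2)) * (1/4)) by (field; lra).
    apply Rmult_le_compat_l; auto. apply Rmult_le_pos; auto. apply Rlt_le, Rinv_0_lt_compat, Rmult_lt_0_compat; auto. }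
  lra.
Qed.

Lemma sin_ge a u : 0 < a <= PI / 2 -> a <= u <= PI - a -> sin a <= sin u.
Proof.
  intros Ha Hu. assert (HP := PI_RGT_0).
  destruct (Rle_dec u (PI / 2)).
  - apply sin_incr_1; lra.
  - rewrite <- (sin_PI_x u). apply sin_incr_1; lra.
Qed.

Lemma cos_gap eta : 0 < eta -> exists del, 0 < del /\
  forall t s, 0 <= t <= PI -> 0 <= s <= PI -> Rabs (cos t - cos s) < del -> Rabs (t - s) < eta.
Proof.
  intros He. assert (HP := PI_RGT_0).
  set (e := Rmin eta PI).
  assert (He1 : 0 < e <= eta) by (unfold e; split; [apply Rmin_glb_lt; lra| apply Rmin_l]).
  assert (He2 : e <= PI) by (unfold e; apply Rmin_r).
  assert (Hs : 0 < sin (e / 2)) by (apply sin_gt_0; lra).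
  exists (2 * sin (e / 2) ^ 2). split; [nra|].
  assert (key : forall t s, 0 <= t <= PI -> 0 <= s <= PI -> t + e <= s ->
            2 * sin (e / 2) ^ 2 <= cos t - cos s).
  { intros t s Ht Hs' Hts.
    assert (cos s <= cos (t + e)).
    { destruct (Req_dec s (t + e)) as [->|hne]; [lra|].
      apply Rlt_le, cos_decreasing_1; lra. }
    assert (cos t - cos (t + e) = 2 * sin (e / 2) * sin (t + e / 2)).
    { rewrite form2. replace ((t - (t + e)) / 2) with (- (e / 2)) by field.
      replace ((t + (t + e)) / 2) with (t + e / 2) by field. rewrite sin_neg. ring. }
    assert (sin (e / 2) <= sin (t + e / 2)) by (apply sin_ge; lra).
    assert (0 <= sin (e / 2) * (sin (t + e / 2) - sin (e / 2))) by (apply Rmult_le_pos; lra).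
    simpl pow. lra. }
  intros t s Ht Hs' Hc.
  destruct (Rlt_dec (Rabs (t - s)) eta) as [ok|nok]; auto. exfalso.
  apply Rnot_lt_le in nok. assert (0 < 2 * sin (e / 2) ^ 2) by nra.
  destruct (Rle_dec t s).
  - rewrite Rabs_left1 in nok by lra.
    assert (Hk := key t s Ht Hs' ltac:(lra)).
    rewrite Rabs_right in Hc by lra. lra.
  - rewrite Rabs_right in nok by lra.
    assert (Hk := key s t Hs' Ht ltac:(lra)).
    rewrite Rabs_left1 in Hc by lra. lra.
Qed.

Lemma cos_approx (h : R -> R) :
  (forall t, 0 <= t <= PI -> continuity_pt h t) ->
  forall eps, 0 < eps -> exists n (v : nat -> R), (0 < n)%nat /\
    forall t, 0 <= t <= PI ->
      Rabs (h t - sum_f_R0 (fun k => v k * bern n ((1 - cos t) / 2) k) n) <= eps.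
Proof.
  intros Hc eps Heps. assert (HP := PI_RGT_0).
  destruct (Heine h (fun t => 0 <= t <= PI) (compact_P3 0 PI) Hc (mkposreal (eps/2) ltac:(lra)))
    as [eta Heta]. simpl in Heta.
  destruct (continuity_ab_maj (fun t => Rabs (h t)) 0 PI ltac:(lra)) as [Mx [HMx HMx']].
  { intros c Hc'. apply (continuity_pt_comp h Rabs). auto. apply Rcontinuity_abs. }
  set (M0 := Rabs (h Mx)).
  assert (HM0 : 0 <= M0) by apply Rabs_pos.
  destruct (cos_gap eta (cond_pos eta)) as [del [Hdel Hgap]].
  destruct (archimed_cor1 (eps * del ^ 2 / (4 * (M0 + 1)))) as [n [Hn1 Hn2]].
  { apply Rdiv_lt_0_compat; [apply Rmult_lt_0_compat; [lra| apply pow_lt; lra]| lra]. }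
  exists n, (fun k => h (acos (1 - 2 * (INR k / INR n)))). split; auto.
  intros t Ht.
  assert (Hn' : 0 < INR n) by (apply lt_0_INR; lia).
  assert (Hct := COS_bound t).
  eapply Rle_trans.
  { apply (bern_approx n ((1 - cos t) / 2) (h t) _ (eps / 2) (del / 2) (2 * M0)); auto; try lra.
    - intros k Hk Hx.
      assert (Hk' : 0 <= INR k / INR n <= 1).
      { split. apply Rmult_le_pos; [apply pos_INR| apply Rlt_le, Rinv_0_lt_compat; auto].
        apply (Rmult_le_reg_r (INR n)); auto. unfold Rdiv. rewrite Rmult_assoc, Rinv_l by lra.
        rewrite Rmult_1_r, Rmult_1_l. apply le_INR; auto. }
      apply Rlt_le. apply Heta; auto. apply acos_bound.
      apply Hgap; auto. apply acos_bound.
      rewrite cos_acos by lra.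
      replace (cos t - (1 - 2 * (INR k / INR n))) with ((-2) * ((1 - cos t) / 2 - INR k / INR n)) by (field; lra).
      rewrite Rabs_mult, (Rabs_left (-2)) by lra. lra.
    - intros k Hk. unfold Rminus. eapply Rle_trans; [apply Rabs_triang|].
      rewrite Rabs_Ropp.
      assert (Rabs (h t) <= M0) by (apply HMx; auto).
      assert (Rabs (h (acos (1 + - (2 * (INR k / INR n))))) <= M0) by (apply HMx, acos_bound).
      lra. }
  assert (2 * M0 / (4 * INR n * (del / 2) ^ 2) <= eps / 2); [|lra].
  replace (2 * M0 / (4 * INR n * (del / 2) ^ 2)) with ((2 * M0 / del ^ 2) * / INR n) by (field; lra).
  assert (0 < del ^ 2) by (apply pow_lt; lra).
  apply Rle_trans with ((2 * (M0 + 1) / del ^ 2) * (eps * del ^ 2 / (4 * (M0 + 1)))).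
  - apply Rmult_le_compat; try lra.
    + apply Rmult_le_pos; [lra| apply Rlt_le, Rinv_0_lt_compat; auto].
    + apply Rlt_le, Rinv_0_lt_compat; auto.
    + apply Rmult_le_compat_r; [apply Rlt_le, Rinv_0_lt_compat; auto| lra].
  - right. field. lra.
Qed.

Definition InSpan (phi : Z -> R -> R) (g : R -> R) :=
  exists l, forall t, g t = lin_comb phi l t.

Lemma lin_comb_cons phi p l t :
  lin_comb phi (p :: l) t = snd p * phi (fst p) t + lin_comb phi l t.
Proof. reflexivity. Qed.

Lemma lin_comb_app phi l1 l2 t :
  lin_comb phi (l1 ++ l2) t = lin_comb phi l1 t + lin_comb phi l2 t.
Proof.
  induction l1 as [|p l1 IH]; simpl app; [simpl; ring|].
  rewrite !lin_comb_cons, IH. ring.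
Qed.

Lemma span_add phi g1 g2 : InSpan phi g1 -> InSpan phi g2 ->
  InSpan phi (fun t => g1 t + g2 t).
Proof.
  intros [l1 H1] [l2 H2]. exists (l1 ++ l2). intros t.
  rewrite lin_comb_app, H1, H2. reflexivity.
Qed.

Lemma span_scal phi c g : InSpan phi g -> InSpan phi (fun t => c * g t).
Proof.
  intros [l H]. exists (map (fun p => (fst p, c * snd p)) l). intros t. rewrite H.
  clear H. induction l as [|p l IH]; simpl map; [simpl; ring|].
  rewrite !lin_comb_cons, <- IH. simpl. ring.
Qed.

Lemma span_ext phi g1 g2 : InSpan phi g1 -> (forall t, g1 t = g2 t) -> InSpan phi g2.
Proof. intros [l H] He. exists l. intros t. rewrite <- He. auto. Qed.

Lemma span_base phi n : InSpan phi (phi n).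
Proof. exists ((n, 1) :: nil). intros t. rewrite lin_comb_cons. simpl. ring. Qed.

Fixpoint cosl (l : list (Z * R)) : list (Z * R) :=
  match l with
  | nil => nil
  | p :: l' => ((fst p + 1)%Z, snd p / 2) :: ((fst p - 1)%Z, snd p / 2) :: cosl l'
  end.

Lemma span_cos phi (Hcos : forall n t, phi n t * cos t = (phi (n + 1)%Z t + phi (n - 1)%Z t) / 2)
  g : InSpan phi g -> InSpan phi (fun t => cos t * g t).
Proof.
  intros [l H]. exists (cosl l). intros t. rewrite H. clear H.
  induction l as [|p l IH]; [simpl; ring|].
  simpl cosl. rewrite !lin_comb_cons, <- IH. simpl fst; simpl snd.
  transitivity (snd p * (phi (fst p) t * cos t) + cos t * lin_comb phi l t); [ring|].
  rewrite Hcos. field.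
Qed.

Inductive cospoly : (R -> R) -> Prop :=
| cp_one : cospoly (fun _ => 1)
| cp_add h1 h2 : cospoly h1 -> cospoly h2 -> cospoly (fun t => h1 t + h2 t)
| cp_scal c h : cospoly h -> cospoly (fun t => c * h t)
| cp_cos h : cospoly h -> cospoly (fun t => cos t * h t)
| cp_ext h1 h2 : cospoly h1 -> (forall t, h1 t = h2 t) -> cospoly h2.

Lemma cospoly_span phi (Hcos : forall n t, phi n t * cos t = (phi (n + 1)%Z t + phi (n - 1)%Z t) / 2)
  s0 h : InSpan phi s0 -> cospoly h -> InSpan phi (fun t => s0 t * h t).
Proof.
  intros Hs Hh. induction Hh.
  - eapply span_ext; [exact Hs|]. intros; ring.
  - eapply span_ext; [apply span_add; [exact IHHh1| exact IHHh2]|]. intros; simpl; ring.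
  - eapply span_ext; [apply (span_scal _ c); exact IHHh|]. intros; simpl; ring.
  - eapply span_ext; [apply span_cos; [exact Hcos| exact IHHh]|]. intros; simpl; ring.
  - eapply span_ext; [exact IHHh|]. intros; simpl. rewrite H. reflexivity.
Qed.

Lemma cospoly_sym h : cospoly h -> forall t, h (2 * PI - t) = h t.
Proof.
  intros Hh t. induction Hh; auto.
  - rewrite IHHh1, IHHh2; auto.
  - rewrite IHHh; auto.
  - rewrite IHHh. rewrite cos_minus, cos_2PI, sin_2PI. f_equal. ring.
  - rewrite <- !H. auto.
Qed.

Lemma cospoly_x h : cospoly h -> cospoly (fun t => (1 - cos t) / 2 * h t).
Proof.
  intros Hh. eapply cp_ext.
  - apply cp_add; [apply (cp_scal (1/2)); exact Hh| apply (cp_scal (-1/2)); apply cp_cos; exact Hh].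
  - intros; simpl; field.
Qed.

Lemma cospoly_1x h : cospoly h -> cospoly (fun t => (1 - (1 - cos t) / 2) * h t).
Proof.
  intros Hh. eapply cp_ext.
  - apply cp_add; [apply (cp_scal (1/2)); exact Hh| apply (cp_scal (1/2)); apply cp_cos; exact Hh].
  - intros; simpl; field.
Qed.

Lemma cospoly_powx i h : cospoly h -> cospoly (fun t => ((1 - cos t) / 2) ^ i * h t).
Proof.
  intros Hh. induction i.
  - eapply cp_ext; [exact Hh|]. intros; simpl; ring.
  - eapply cp_ext; [apply cospoly_x; exact IHi|]. intros; simpl; ring.
Qed.

Lemma cospoly_pow1x i h : cospoly h -> cospoly (fun t => (1 - (1 - cos t) / 2) ^ i * h t).
Proof.
  intros Hh. induction i.
  - eapply cp_ext; [exact Hh|]. intros; simpl; ring.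
  - eapply cp_ext; [apply cospoly_1x; exact IHi|]. intros; simpl; ring.
Qed.

Lemma cospoly_bern n (v : nat -> R) :
  cospoly (fun t => sum_f_R0 (fun k => v k * bern n ((1 - cos t) / 2) k) n).
Proof.
  assert (Hk : forall k, cospoly (fun t => v k * bern n ((1 - cos t) / 2) k)).
  { intros k. eapply cp_ext.
    - apply (cp_scal (v k * C n k)). apply (cospoly_powx k). apply (cospoly_pow1x (n - k)). apply cp_one.
    - intros t. unfold bern. ring. }
  generalize n at 2. intros m. induction m.
  - simpl. apply Hk.
  - eapply cp_ext; [apply cp_add; [exact IHm| apply (Hk (S m))]|]. intros; simpl. reflexivity.
Qed.

Lemma lin_comb_cont phi (Hc : forall n t, continuity_pt (phi n) t) l t :
  continuity_pt (lin_comb phi l) t.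
Proof.
  induction l as [|p l IH].
  - apply continuity_pt_const. intros x y. reflexivity.
  - change (lin_comb phi (p :: l)) with (plus_fct (mult_fct (fct_cte (snd p)) (phi (fst p))) (lin_comb phi l)).
    apply continuity_pt_plus; auto. apply continuity_pt_mult; auto.
    apply continuity_pt_const. intros x y. reflexivity.
Qed.

Lemma cpl_ext f g x : (forall t, f t = g t) -> continuity_pt f x -> continuity_pt g x.
Proof. intros H Hf. assert (f = g) by (apply functional_extensionality; auto). subst; auto. Qed.
Lemma cpl_plus f g x : continuity_pt f x -> continuity_pt g x -> continuity_pt (fun t => f t + g t) x.
Proof. intros; exact (continuity_pt_plus f g x H H0). Qed.
Lemma cpl_minus f g x : continuity_pt f x -> continuity_pt g x -> continuity_pt (fun t => f t - g t) x.
Proof. intros; exact (continuity_pt_minus f g x H H0). Qed.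
Lemma cpl_mult f g x : continuity_pt f x -> continuity_pt g x -> continuity_pt (fun t => f t * g t) x.
Proof. intros; exact (continuity_pt_mult f g x H H0). Qed.
Lemma cpl_div f g x : continuity_pt f x -> continuity_pt g x -> g x <> 0 -> continuity_pt (fun t => f t / g t) x.
Proof. intros; exact (continuity_pt_div f g x H H0 H1). Qed.
Lemma cpl_const c x : continuity_pt (fun _ => c) x.
Proof. apply continuity_pt_const. intros u v; reflexivity. Qed.
Lemma cpl_id x : continuity_pt (fun t => t) x.
Proof. apply derivable_continuous_pt, derivable_pt_id. Qed.
Lemma cpl_comp f g x : continuity_pt f x -> continuity_pt g (f x) -> continuity_pt (fun t => g (f t)) x.
Proof. intros; exact (continuity_pt_comp f g x H H0). Qed.
Lemma cpl_sq f x : continuity_pt f x -> continuity_pt (fun t => f t ^ 2) x.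
Proof. intros H. apply (cpl_ext (fun t => f t * f t)); [intros; ring| apply cpl_mult; auto]. Qed.
Lemma cpl_sin f x : continuity_pt f x -> continuity_pt (fun t => sin (f t)) x.
Proof. intros H. apply (cpl_comp f sin); auto. apply continuity_sin. Qed.
Lemma cpl_cos f x : continuity_pt f x -> continuity_pt (fun t => cos (f t)) x.
Proof. intros H. apply (cpl_comp f cos); auto. apply continuity_cos. Qed.

Lemma RI_bound h a b K (Hab : a <= b) (pr : Riemann_integrable h a b) :
  (forall x, a <= x <= b -> h x <= K) -> RiemannInt pr <= K * (b - a).
Proof.
  intros H. rewrite <- (RiemannInt_P15 (RiemannInt_P14 a b K)).
  apply RiemannInt_P19; auto. intros x Hx. unfold fct_cte. apply H. lra.
Qed.

Lemma RI_split h a b c K1 K2 : a <= b -> b <= c ->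
  (forall x, a <= x <= c -> continuity_pt h x) ->
  (forall pr1 : Riemann_integrable h a b, RiemannInt pr1 <= K1) ->
  (forall pr2 : Riemann_integrable h b c, RiemannInt pr2 <= K2) ->
  forall pr : Riemann_integrable h a c, RiemannInt pr <= K1 + K2.
Proof.
  intros Hab Hbc Hc H1 H2 pr.
  assert (pr1 : Riemann_integrable h a b)
    by (apply continuity_implies_RiemannInt; auto; intros; apply Hc; lra).
  assert (pr2 : Riemann_integrable h b c)
    by (apply continuity_implies_RiemannInt; auto; intros; apply Hc; lra).
  rewrite <- (RiemannInt_P26 pr1 pr2 pr).
  specialize (H1 pr1). specialize (H2 pr2). lra.
Qed.

Lemma RI_piece h a b K : a <= b -> (forall x, a <= x <= b -> h x <= K) ->
  forall pr : Riemann_integrable h a b, RiemannInt pr <= K * (b - a).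
Proof. intros; apply RI_bound; auto. Qed.

Lemma sq_le y c : Rabs y <= c -> y ^ 2 <= c ^ 2.
Proof.
  intros H. rewrite <- (pow2_abs y). apply pow_incr. split; [apply Rabs_pos| auto].
Qed.

Theorem generic (phi : Z -> R -> R) (a b : R -> R) (D : R)
  (Hcos : forall n t, phi n t * cos t = (phi (n + 1)%Z t + phi (n - 1)%Z t) / 2)
  (Hphi : forall n t, continuity_pt (phi n) t)
  (Ha : InSpan phi a) (Hb : InSpan phi (fun t => b t * sin t))
  (Hac : forall t, continuity_pt a t) (Hbc : forall t, continuity_pt b t)
  (Ha1 : forall t, Rabs (a t) <= 1) (Hb1 : forall t, Rabs (b t) <= 1)
  (HD : 0 < D) (HDe : forall u, a u * b (2 * PI - u) + b u * a (2 * PI - u) = D) :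
  complete_L2_0_2PI phi.
Proof.
  intros f Hf eps Heps. assert (HP := PI_RGT_0). assert (HP4 := PI_4).
  destruct (continuity_ab_maj (fun t => Rabs (f t)) 0 (2 * PI) ltac:(lra)) as [Mx [HMx HMx']].
  { intros c Hc'. apply (cpl_comp f Rabs). auto. apply Rcontinuity_abs. }
  set (M := Rabs (f Mx)). assert (HM0 : 0 <= M) by apply Rabs_pos.
  set (K := (M + 1) ^ 2). assert (HK : 1 <= K) by (unfold K; nra).
  set (a0 := Rmin (PI / 4) (eps / (16 * K))).
  assert (Ha0 : 0 < a0 <= PI / 4).
  { unfold a0. split; [apply Rmin_glb_lt; [lra| apply Rdiv_lt_0_compat; lra]| apply Rmin_l]. }
  assert (Ha0' : 4 * a0 * K <= eps / 4).
  { assert (a0 <= eps / (16 * K)) by (unfold a0; apply Rmin_r).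
    apply (Rmult_le_compat_r (4 * K)) in H; [|lra].
    replace (eps / (16 * K) * (4 * K)) with (eps / 4) in H by (field; lra). lra. }
  set (m0 := sin a0 ^ 2).
  assert (Hsa0 : 0 < sin a0) by (apply sin_gt_0; lra).
  assert (Hm0 : 0 < m0) by (unfold m0; apply pow_lt; auto).
  set (gam := Rmin 1 (eps / (8 * PI))).
  assert (Hgam : 0 < gam <= 1).
  { unfold gam. split; [apply Rmin_glb_lt; [lra| apply Rdiv_lt_0_compat; lra]| apply Rmin_l]. }
  assert (Hgam' : 2 * PI * gam ^ 2 <= eps / 4).
  { assert (gam <= eps / (8 * PI)) by (unfold gam; apply Rmin_r).
    assert (gam ^ 2 <= gam) by (simpl; nra).
    apply (Rmult_le_compat_r (2 * PI)) in H; [|lra].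
    replace (eps / (8 * PI) * (2 * PI)) with (eps / 4) in H by (field; lra). nra. }
  set (ep := Rmin (1 / 2) (gam / 4)).
  assert (Hep : 0 < ep <= 1 / 2 /\ ep <= gam / 4).
  { unfold ep. split; [split; [apply Rmin_glb_lt; lra| apply Rmin_l]| apply Rmin_r]. }
  set (r := gam * m0 / (2 * (M + 1))).
  assert (Hr : 0 < r) by (unfold r; apply Rdiv_lt_0_compat; [apply Rmult_lt_0_compat|]; lra).
  assert (Hs2 : forall t, 0 <= sin t ^ 2) by (intros; apply pow2_ge_0).
  assert (Hden : forall t, sin t ^ 2 + r <> 0) by (intros t; specialize (Hs2 t); lra).
  set (chi := fun t => sin t ^ 2 / (sin t ^ 2 + r)).
  set (Cf := fun u => chi u * (b (2 * PI - u) * f u + b u * f (2 * PI - u)) / D).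
  set (Qf := fun u => sin u * ((a (2 * PI - u) * f u - a u * f (2 * PI - u)) / D) / (sin u ^ 2 + r)).
  assert (Hchi_sym : forall u, chi (2 * PI - u) = chi u).
  { intros u. unfold chi. replace (sin (2 * PI - u)) with (- sin u).
    - f_equal; ring.
    - rewrite sin_minus, sin_2PI, cos_2PI. ring. }
  assert (Id1 : forall u, a u * Cf u + b u * sin u * Qf u = f u * chi u).
  { intros u. unfold Cf, Qf, chi.
    transitivity (sin u ^ 2 / (sin u ^ 2 + r) * (f u * (a u * b (2 * PI - u) + b u * a (2 * PI - u))) / D).
    - field; repeat split; auto; lra.
    - rewrite HDe. field; repeat split; auto; lra. }
  assert (Id2 : forall u, a (2 * PI - u) * Cf u - b (2 * PI - u) * sin u * Qf u = f (2 * PI - u) * chi u).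
  { intros u. unfold Cf, Qf, chi.
    transitivity (sin u ^ 2 / (sin u ^ 2 + r) * (f (2 * PI - u) * (a u * b (2 * PI - u) + b u * a (2 * PI - u))) / D).
    - field; repeat split; auto; lra.
    - rewrite HDe. field; repeat split; auto; lra. }
  assert (Hfr : forall u, 0 <= u <= PI -> continuity_pt (fun t => f (2 * PI - t)) u).
  { intros u Hu. apply (cpl_comp (fun t => 2 * PI - t) f).
    - apply cpl_minus; [apply cpl_const| apply cpl_id].
    - apply Hf. lra. }
  assert (Hchic : forall u, continuity_pt chi u).
  { intros u. unfold chi. apply cpl_div; [| apply cpl_plus; [|apply cpl_const]| auto];
    apply cpl_sq, cpl_sin, cpl_id. }
  assert (HCc : forall u, 0 <= u <= PI -> continuity_pt Cf u).
  { intros u Hu. unfold Cf. apply cpl_div; [| apply cpl_const| lra].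
    apply cpl_mult; auto. apply cpl_plus; apply cpl_mult.
    - apply (cpl_comp (fun t => 2 * PI - t) b); [apply cpl_minus; [apply cpl_const| apply cpl_id]| auto].
    - apply Hf; lra.
    - auto.
    - auto. }
  assert (HQc : forall u, 0 <= u <= PI -> continuity_pt Qf u).
  { intros u Hu. unfold Qf. apply cpl_div; [| apply cpl_plus; [apply cpl_sq, cpl_sin, cpl_id| apply cpl_const]| auto].
    apply cpl_mult; [apply cpl_sin, cpl_id|]. apply cpl_div; [| apply cpl_const| lra].
    apply cpl_minus; apply cpl_mult.
    - apply (cpl_comp (fun t => 2 * PI - t) a); [apply cpl_minus; [apply cpl_const| apply cpl_id]| auto].
    - apply Hf; lra.
    - auto.
    - auto. }
  destruct (cos_approx Cf HCc ep ltac:(lra)) as [nC [vC [_ HCa]]].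
  destruct (cos_approx Qf HQc ep ltac:(lra)) as [nQ [vQ [_ HQa]]].
  set (P := fun t => sum_f_R0 (fun k => vC k * bern nC ((1 - cos t) / 2) k) nC).
  set (q := fun t => sum_f_R0 (fun k => vQ k * bern nQ ((1 - cos t) / 2) k) nQ).
  assert (HPc : cospoly P) by apply cospoly_bern.
  assert (Hqc : cospoly q) by apply cospoly_bern.
  assert (Hg : InSpan phi (fun t => a t * P t + b t * sin t * q t)).
  { apply span_add. apply cospoly_span; auto. apply (cospoly_span phi Hcos _ q Hb Hqc). }
  destruct Hg as [l Hl].
  exists l.
  set (h := fun t => (f t - lin_comb phi l t) ^ 2).
  assert (Hhc : forall t, 0 <= t <= 2 * PI -> continuity_pt h t).
  { intros t Ht. unfold h. apply cpl_sq, cpl_minus; [apply Hf; auto| apply lin_comb_cont; auto]. }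
  exists (@continuity_implies_RiemannInt h 0 (2 * PI) ltac:(lra) Hhc).
  assert (Herr : forall t, 0 <= t <= 2 * PI -> Rabs (f t * chi t - lin_comb phi l t) <= 2 * ep).
  { intros t Ht. rewrite <- Hl.
    assert (Hs1 : forall u, Rabs (sin u) <= 1) by (intros; apply Rabs_le, SIN_bound).
    destruct (Rle_dec t PI) as [Hle|Hgt].
    - rewrite <- Id1.
      replace (a t * Cf t + b t * sin t * Qf t - (a t * P t + b t * sin t * q t))
        with (a t * (Cf t - P t) + b t * sin t * (Qf t - q t)) by ring.
      eapply Rle_trans; [apply Rabs_triang|]. rewrite !Rabs_mult.
      assert (Rabs (Cf t - P t) <= ep) by (apply HCa; lra).
      assert (Rabs (Qf t - q t) <= ep) by (apply HQa; lra).
      specialize (Ha1 t); specialize (Hb1 t); specialize (Hs1 t).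
      assert (0 <= Rabs (Cf t - P t)) by apply Rabs_pos.
      assert (0 <= Rabs (Qf t - q t)) by apply Rabs_pos.
      assert (0 <= Rabs (a t)) by apply Rabs_pos.
      assert (0 <= Rabs (b t)) by apply Rabs_pos.
      assert (0 <= Rabs (sin t)) by apply Rabs_pos.
      assert (Rabs (a t) * Rabs (Cf t - P t) <= ep) by nra.
      assert (Rabs (b t) * Rabs (sin t) <= 1) by nra.
      assert (Rabs (b t) * Rabs (sin t) * Rabs (Qf t - q t) <= ep) by nra.
      lra.
    - set (u := 2 * PI - t).
      assert (Hu : 0 <= u <= PI) by (unfold u; lra).
      replace t with (2 * PI - u) by (unfold u; ring).
      rewrite Hchi_sym, <- Id2.
      rewrite (cospoly_sym P HPc), (cospoly_sym q Hqc).
      replace (sin (2 * PI - u)) with (- sin u) by (rewrite sin_minus, sin_2PI, cos_2PI; ring).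
      replace (a (2 * PI - u) * Cf u - b (2 * PI - u) * sin u * Qf u -
               (a (2 * PI - u) * P u + b (2 * PI - u) * - sin u * q u))
        with (a (2 * PI - u) * (Cf u - P u) + - (b (2 * PI - u) * sin u * (Qf u - q u))) by ring.
      eapply Rle_trans; [apply Rabs_triang|]. rewrite Rabs_Ropp, !Rabs_mult.
      assert (Rabs (Cf u - P u) <= ep) by (apply HCa; lra).
      assert (Rabs (Qf u - q u) <= ep) by (apply HQa; lra).
      specialize (Ha1 (2 * PI - u)); specialize (Hb1 (2 * PI - u)); specialize (Hs1 u).
      assert (0 <= Rabs (Cf u - P u)) by apply Rabs_pos.
      assert (0 <= Rabs (Qf u - q u)) by apply Rabs_pos.
      assert (0 <= Rabs (a (2 * PI - u))) by apply Rabs_pos.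
      assert (0 <= Rabs (b (2 * PI - u))) by apply Rabs_pos.
      assert (0 <= Rabs (sin u)) by apply Rabs_pos.
      assert (Rabs (a (2 * PI - u)) * Rabs (Cf u - P u) <= ep) by nra.
      assert (Rabs (b (2 * PI - u)) * Rabs (sin u) <= 1) by nra.
      assert (Rabs (b (2 * PI - u)) * Rabs (sin u) * Rabs (Qf u - q u) <= ep) by nra.
      lra. }
  assert (Htot : forall t, 0 <= t <= 2 * PI ->
            Rabs (f t - lin_comb phi l t) <= M * (r / (sin t ^ 2 + r)) + 2 * ep).
  { intros t Ht.
    replace (f t - lin_comb phi l t) with (f t * (r / (sin t ^ 2 + r)) + (f t * chi t - lin_comb phi l t)).
    2:{ unfold chi. field. auto. }
    eapply Rle_trans; [apply Rabs_triang|].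
    apply Rplus_le_compat; [| apply Herr; auto].
    rewrite Rabs_mult. rewrite (Rabs_right (r / _)).
    2:{ apply Rle_ge, Rlt_le, Rdiv_lt_0_compat; auto. specialize (Hs2 t); lra. }
    apply Rmult_le_compat_r; [apply Rlt_le, Rdiv_lt_0_compat; auto; specialize (Hs2 t); lra|].
    apply HMx; auto. }
  assert (Hbad : forall t, 0 <= t <= 2 * PI -> h t <= K).
  { intros t Ht. unfold h, K. apply sq_le.
    eapply Rle_trans; [apply Htot; auto|].
    assert (r / (sin t ^ 2 + r) <= 1).
    { specialize (Hs2 t). apply (Rmult_le_reg_r (sin t ^ 2 + r)); [lra|].
      unfold Rdiv. rewrite Rmult_assoc, Rinv_l by auto. lra. }
    assert (0 <= r / (sin t ^ 2 + r)) by (apply Rlt_le, Rdiv_lt_0_compat; auto; specialize (Hs2 t); lra).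
    nra. }
  assert (Hgood : forall t, 0 <= t <= 2 * PI -> m0 <= sin t ^ 2 -> h t <= gam ^ 2).
  { intros t Ht Hm. unfold h. apply sq_le.
    eapply Rle_trans; [apply Htot; auto|].
    assert (r / (sin t ^ 2 + r) <= r / m0).
    { apply Rmult_le_compat_l; [lra|]. apply Rinv_le_contravar; auto. lra. }
    assert (M * (r / m0) <= gam / 2).
    { unfold r. replace (M * (gam * m0 / (2 * (M + 1)) / m0)) with ((gam / 2) * (M / (M + 1))) by (field; lra).
      assert (M / (M + 1) <= 1).
      { apply (Rmult_le_reg_r (M + 1)); [lra|]. unfold Rdiv. rewrite Rmult_assoc, Rinv_l by lra. lra. }
      assert (0 <= M / (M + 1)) by (apply Rmult_le_pos; [lra| apply Rlt_le, Rinv_0_lt_compat; lra]).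
      nra. }
    assert (M * (r / (sin t ^ 2 + r)) <= M * (r / m0)) by (apply Rmult_le_compat_l; auto).
    lra. }
  assert (Hg1 : forall t, a0 <= t <= PI - a0 -> m0 <= sin t ^ 2).
  { intros t Ht. unfold m0. apply pow_incr. split; [lra| apply sin_ge; lra]. }
  assert (Hg2 : forall t, PI + a0 <= t <= 2 * PI - a0 -> m0 <= sin t ^ 2).
  { intros t Ht. replace (sin t) with (- sin (t - PI)).
    - replace ((- sin (t - PI)) ^ 2) with (sin (t - PI) ^ 2) by ring. apply Hg1. lra.
    - rewrite sin_minus, sin_PI, cos_PI. ring. }
  assert (Hgam2 : 0 <= gam ^ 2) by apply pow2_ge_0.
  eapply Rle_lt_trans.
  { apply (RI_split h 0 a0 (2 * PI) (K * (a0 - 0)) (gam ^ 2 * (PI - a0 - a0) + (K * (PI + a0 - (PI - a0)) + (gam ^ 2 * (2 * PI - a0 - (PI + a0)) + K * (2 * PI - (2 * PI - a0)))))); try lra; auto.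
    - intros; apply RI_piece; [lra|]. intros; apply Hbad; lra.
    - apply (RI_split h a0 (PI - a0) (2 * PI)); try lra. intros; apply Hhc; lra.
      + intros; apply RI_piece; [lra|]. intros; apply Hgood; [lra| apply Hg1; lra].
      + apply (RI_split h (PI - a0) (PI + a0) (2 * PI)); try lra. intros; apply Hhc; lra.
        * intros; apply RI_piece; [lra|]. intros; apply Hbad; lra.
        * apply (RI_split h (PI + a0) (2 * PI - a0) (2 * PI)); try lra. intros; apply Hhc; lra.
          -- intros; apply RI_piece; [lra|]. intros; apply Hgood; [lra| apply Hg2; lra].
          -- intros; apply RI_piece; [lra|]. intros; apply Hbad; lra. }
  assert (gam ^ 2 * (PI - a0 - a0) + gam ^ 2 * (2 * PI - a0 - (PI + a0)) <= 2 * PI * gam ^ 2) by nra.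
  lra.
Qed.

Theorem lemma3 (beta : R) (hb : 0 < beta < 1 / 2) :
  complete_L2_0_2PI (sin_system beta) /\ complete_L2_0_2PI (cos_system beta).
Proof.
  assert (HP := PI_RGT_0).
  assert (HD : 0 < sin (2 * PI * beta)) by (apply sin_gt_0; nra).
  assert (Hlin : forall n, continuity (fun t => (IZR n + beta) * t)).
  { intros n t. apply cpl_mult; [apply cpl_const| apply cpl_id]. }
  split.
  - apply (generic (sin_system beta) (fun t => sin (beta * t)) (fun t => cos (beta * t)) (sin (2 * PI * beta))); auto.
    + intros n t. unfold sin_system. rewrite plus_IZR, minus_IZR, form3.
      replace (((IZR n + 1 + beta) * t - (IZR n - 1 + beta) * t) / 2) with t by field.
      replace (((IZR n + 1 + beta) * t + (IZR n - 1 + beta) * t) / 2) with ((IZR n + beta) * t) by field.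
      field.
    + intros n t. unfold sin_system. apply cpl_sin. apply Hlin.
    + eapply span_ext; [apply (span_base _ 0%Z)|]. intros t. unfold sin_system. f_equal. ring.
    + eapply span_ext; [apply span_add; [apply (span_scal _ (1/2)); apply (span_base _ 1%Z)| apply (span_scal _ (-1/2)); apply (span_base _ (-1)%Z)]|].
      intros t. unfold sin_system.
      transitivity ((sin ((1 + beta) * t) - sin ((-1 + beta) * t)) / 2); [field|].
      rewrite form4.
      replace (((1 + beta) * t + (-1 + beta) * t) / 2) with (beta * t) by field.
      replace (((1 + beta) * t - (-1 + beta) * t) / 2) with t by field. field.
    + intros t. apply cpl_sin, cpl_mult; [apply cpl_const| apply cpl_id].
    + intros t. apply cpl_cos, cpl_mult; [apply cpl_const| apply cpl_id].
    + intros; apply Rabs_le, SIN_bound.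
    + intros; apply Rabs_le, COS_bound.
    + intros u. rewrite <- sin_plus. f_equal. ring.
  - apply (generic (cos_system beta) (fun t => cos (beta * t)) (fun t => sin (beta * t)) (sin (2 * PI * beta))); auto.
    + intros n t. unfold cos_system. rewrite plus_IZR, minus_IZR, form1.
      replace (((IZR n + 1 + beta) * t - (IZR n - 1 + beta) * t) / 2) with t by field.
      replace (((IZR n + 1 + beta) * t + (IZR n - 1 + beta) * t) / 2) with ((IZR n + beta) * t) by field.
      field.
    + intros n t. unfold cos_system. apply cpl_cos. apply Hlin.
    + eapply span_ext; [apply (span_base _ 0%Z)|]. intros t. unfold cos_system. f_equal. ring.
    + eapply span_ext; [apply span_add; [apply (span_scal _ (1/2)); apply (span_base _ (-1)%Z)| apply (span_scal _ (-1/2)); apply (span_base _ 1%Z)]|].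
      intros t. unfold cos_system.
      transitivity ((cos ((-1 + beta) * t) - cos ((1 + beta) * t)) / 2); [field|].
      rewrite form2.
      replace (((-1 + beta) * t + (1 + beta) * t) / 2) with (beta * t) by field.
      replace (((-1 + beta) * t - (1 + beta) * t) / 2) with (- t) by field. rewrite sin_neg. field.
    + intros t. apply cpl_cos, cpl_mult; [apply cpl_const| apply cpl_id].
    + intros t. apply cpl_sin, cpl_mult; [apply cpl_const| apply cpl_id].
    + intros; apply Rabs_le, COS_bound.
    + intros; apply Rabs_le, SIN_bound.
    + intros u. rewrite Rplus_comm, <- sin_plus. f_equal. ring.
Qed.
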